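(* Let $(\Omega,\mathcal{A},\mu)$ be a measure space and $F:\mathbb{R}^m\rightrightarrows\mathbb{R}^n$ a set-valued map. Let $(x_k)$, $(y_k)$ be sequences of measurable functions such that $x_k\to x$ $\mu$-almost everywhere for some function $x:\Omega\to\mathbb{R}^m$, $y_k\rightharpoonup y$ weakly in $L^1(\mu;\mathbb{R}^n)$, and $y_k(t)\in F(x_k(t))$ for $\mu$-almost all $t\in\Omega$. Then $y(t)\in(\operatorname{conv}^\infty F)(x(t))$ for $\mu$-almost all $t\in\Omega$.
   Context: For sets $A_k\subset\mathbb{R}^n$, the outer limit is $\limsup_{k\to\infty}A_k:=\{y:\ \exists$ a subsequence $k_j$ and $y_{k_j}\in A_{k_j}$ with $y_{k_j}\to y\}$. For $U\subset\mathbb{R}^m$, $F(U):=\bigcup_{x'\in U}F(x')$; $\operatorname{conv}$ denotes convex hull; $B_r(0)$ is the open ball of radius $r$. Define $(\operatorname{conv}^\infty F)(x):=\limsup_{k\to\infty}\operatorname{conv}\big(F(x+B_{1/k}(0))\big)$. *)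

(* Defs.v *)
From HB Require Import structures.
From mathcomp Require Import all_boot all_order all_algebra.
From mathcomp Require Import all_classical all_reals all_analysis.
Set Implicit Arguments. Unset Strict Implicit. Unset Printing Implicit Defensive.
Import Order.TTheory GRing.Theory Num.Theory.
Import numFieldNormedType.Exports.
Local Open Scope classical_set_scope.
Local Open Scope ring_scope.

(* R^n is modelled by row vectors 'rV[R]_n. *)

Definition enorm {R : realType} {n : nat} (v : 'rV[R]_n) : R :=
  Num.sqrt (\sum_(i < n) v ord0 i ^+ 2).

Definition eball {R : realType} {n : nat} (x : 'rV[R]_n) (r : R) : set 'rV[R]_n :=
  [set x' | enorm (x' - x) < r].

Definition svimage {R : realType} {m n : nat}
  (F : 'rV[R]_m -> set 'rV[R]_n) (U : set 'rV[R]_m) : set 'rV[R]_n :=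
  \bigcup_(x' in U) F x'.

Definition conv_hull {R : realType} {n : nat} (A : set 'rV[R]_n) : set 'rV[R]_n :=
  [set z | exists (N : nat) (lam : 'I_N -> R) (p : 'I_N -> 'rV[R]_n),
      (forall i, 0 <= lam i) /\ \sum_(i < N) lam i = 1 /\
      (forall i, A (p i)) /\ z = \sum_(i < N) lam i *: p i].

Definition outer_limit {R : realType} {n : nat} (A : nat -> set 'rV[R]_n)
  : set 'rV[R]_n :=
  [set y | exists (phi : nat -> nat) (z : nat -> 'rV[R]_n),
      (forall j, (phi j < phi j.+1)%N) /\ (forall j, A (phi j) (z j)) /\
      z @ \oo --> y].

(* (conv^infty F)(x) = limsup_k conv(F(x + B_{1/k}(0))), k = 1,2,...
   (indexed here by k.+1). Note x + B_r(0) = B_r(x). *)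
Definition conv_infty {R : realType} {m n : nat}
  (F : 'rV[R]_m -> set 'rV[R]_n) (x : 'rV[R]_m) : set 'rV[R]_n :=
  outer_limit (fun k => conv_hull (svimage F (eball x (k.+1%:R)^-1))).

(* Measurability of an R^m-valued function (componentwise, equivalently Borel). *)
Definition vmeasurable {d : measure_display} {T : measurableType d}
  {R : realType} {m : nat} (f : T -> 'rV[R]_m) : Prop :=
  forall i : 'I_m, measurable_fun setT (fun t => f t ord0 i).

Definition vintegrable {d : measure_display} {T : measurableType d}
  {R : realType} (mu : {measure set T -> \bar R}) {n : nat}
  (f : T -> 'rV[R]_n) : Prop :=
  forall i : 'I_n, mu.-integrable setT (fun t => (f t ord0 i)%:E).

(* Continuous linear functionals on L^1(mu; R^n): maps which are linear on
   integrable functions and bounded by C * ||f||_{L^1}. *)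
Definition L1_dual {d : measure_display} {T : measurableType d}
  {R : realType} (mu : {measure set T -> \bar R}) {n : nat}
  (phi : (T -> 'rV[R]_n) -> R) : Prop :=
  (forall f g, vintegrable mu f -> vintegrable mu g ->
      phi (fun t => f t + g t) = phi f + phi g) /\
  (forall (a : R) f, vintegrable mu f -> phi (fun t => a *: f t) = a * phi f) /\
  (exists C : R, forall f, vintegrable mu f ->
      (`|phi f|%:E <= C%:E * \int[mu]_t (enorm (f t))%:E)%E).

Definition weak_L1_cvg {d : measure_display} {T : measurableType d}
  {R : realType} (mu : {measure set T -> \bar R}) {n : nat}
  (y_ : nat -> T -> 'rV[R]_n) (y : T -> 'rV[R]_n) : Prop :=
  (forall k, vintegrable mu (y_ k)) /\ vintegrable mu y /\
  (forall phi, L1_dual mu phi -> (fun k => phi (y_ k)) @ \oo --> phi y).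

(* Main.v *)
Require Import Defs.
From HB Require Import structures.
From mathcomp Require Import all_boot all_order all_algebra.
From mathcomp Require Import all_classical all_reals all_analysis.
From mathcomp Require Import ring lra measurable_realfun.
Import Order.TTheory GRing.Theory Num.Theory.
Import numFieldNormedType.Exports.
Local Open Scope classical_set_scope.
Local Open Scope ring_scope.
Import Num.Def.
Set Implicit Arguments. Unset Strict Implicit.

Section vec.
Variables (R : realType) (n : nat).
Implicit Types a b c : 'rV[R]_n.
Definition dotv a b : R := \sum_(i < n) a ord0 i * b ord0 i.
Definition sqv a := dotv a a.

Ltac sums := rewrite /sqv /dotv ?mulr_sumr;
  repeat (rewrite -big_split /= || rewrite -sumrB /=);
  apply: eq_bigr => i _; rewrite ?mxE.

Lemma sqv_ge0 a : 0 <= sqv a.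
Proof. by apply: sumr_ge0 => i _; rewrite -expr2 sqr_ge0. Qed.

Lemma enormE a : enorm a = Num.sqrt (sqv a).
Proof. by rewrite /enorm /sqv /dotv; congr Num.sqrt; apply: eq_bigr => i _; rewrite expr2. Qed.

Lemma paral W x y : sqv (x - y) =
  2 * sqv (W - x) + 2 * sqv (W - y) - 4 * sqv (W - 2^-1 *: (x + y)).
Proof. by sums; field. Qed.

Lemma comb_exp W x u (s : R) : sqv (W - ((1 - s) *: x + s *: u)) =
  sqv (W - x) - 2 * s * dotv (W - x) (u - x) + s ^+ 2 * sqv (u - x).
Proof. sums. ring. Qed.

Lemma entry_le_sqv a i : (a ord0 i) ^+ 2 <= sqv a.
Proof.
rewrite /sqv /dotv (bigD1 i) //= -expr2 lerDl.
by apply: sumr_ge0 => j _; rewrite -expr2 sqr_ge0.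
Qed.

End vec.
Arguments dotv {R n}. Arguments sqv {R n}.

Section vec1b.
Variables (R : realType) (n : nat).
Lemma dot_split (a y u p : 'rV[R]_n) :
  dotv a (y - u) = dotv a (y - p) - dotv a (u - p).
Proof. rewrite /dotv -sumrB; apply: eq_bigr => i _; rewrite !mxE; ring. Qed.
End vec1b.

Section vec2.
Variables (R : realType) (n : nat).
Local Notation V := 'rV[R]_n.

Lemma entry_le_norm (v : V) i j : `|v i j| <= `|v|.
Proof.
rewrite [leRHS]/normr /= mx_normrE.
by apply/bigmax_geP; right => /=; exists (i, j).
Qed.

Lemma norm_le_sqrt (v : V) : `|v| <= Num.sqrt (sqv v).
Proof.
rewrite [leLHS]/normr /= mx_normrE.
apply/bigmax_leP; split => [|[i j] _ /=]; first exact: sqrtr_ge0.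
rewrite (ord1 i) -sqrtr_sqr; apply: ler_wsqrtr; exact: entry_le_sqv.
Qed.

Lemma cvg_entry (m : nat -> V) (p : V) i : m @ \oo --> p -> (fun k => m k ord0 i) @ \oo --> p ord0 i.
Proof.
move=> /cvgrPdist_lt mp; apply/cvgrPdist_lt => e e0.
apply: filterS (mp e e0) => k; apply: le_lt_trans.
have -> : p ord0 i - m k ord0 i = (p - m k) ord0 i by rewrite !mxE.
exact: entry_le_norm.
Qed.

Lemma cvg_sumI (f : 'I_n -> nat -> R) (L : 'I_n -> R) :
  (forall i, f i @ \oo --> L i) ->
  (fun k => \sum_(i < n) f i k) @ \oo --> \sum_(i < n) L i.
Proof.
move=> h.
have H : forall s : seq 'I_n,
    (fun k => \sum_(i <- s) f i k) @ \oo --> \sum_(i <- s) L i.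
  elim=> [|i s IH].
    under eq_fun do rewrite big_nil.
    by rewrite big_nil; exact: cvg_cst.
  under eq_fun do rewrite big_cons.
  by rewrite big_cons; exact: cvgD.
exact: H.
Qed.

Lemma cvg_dotv (x y : nat -> V) (a b : V) : x @ \oo --> a -> y @ \oo --> b ->
  (fun k => dotv (x k) (y k)) @ \oo --> dotv a b.
Proof.
move=> xa yb; rewrite /dotv.
apply: (@cvg_sumI (fun i k => x k ord0 i * y k ord0 i)) => i.
by apply: cvgM; apply: cvg_entry.
Qed.


Definition scl (l : nat) : R := (l.+1%:R)^-1.

Lemma sqv_sym (x y : V) : sqv (x - y) = sqv (y - x).
Proof. rewrite /sqv /dotv; apply: eq_bigr => i _; rewrite !mxE; ring. Qed.

Lemma proj_analysis (W : V) (U : nat -> V) (m : nat -> V) :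
 (forall k, sqv (W - m k.+1) <= sqv (W - m k)) ->
 (forall k b, (b <= k)%N -> sqv (W - m k.+1) <= sqv (W - 2^-1 *: (m k + m b))) ->
 (forall k j l, (j <= k)%N -> (l <= k)%N ->
    sqv (W - m k.+1) <= sqv (W - ((1 - scl l) *: m k + scl l *: U j))) ->
 exists p : V, m @ \oo --> p /\ forall j, dotv (W - p) (U j - p) <= 0.
Proof.
move=> H1 H2 H3.
pose a k := sqv (W - m k).
have ani : nonincreasing_seq a by apply/nonincreasing_seqP.
have acvg : cvgn a.
  apply: nonincreasing_is_cvgn => //; exists 0 => _ [k _ <-]; exact: sqv_ge0.
set D := limn a.
have aD k : D <= a k by exact: nonincreasing_cvgn_ge.
have cau k b : (b <= k)%N -> sqv (m k - m b) <= 4 * (a b - D).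
  move=> bk; rewrite (paral W).
  have := H2 k b bk; have := ani b k bk; have := aD k.+1.
  rewrite /a; lra.
have mcvg : cvgn m.
  apply: cauchy_cvg; apply: cauchy_exP => e e0.
  have : \forall k \near \oo, `|D - a k| < e ^+ 2 / 4.
    by move/cvgrPdist_lt : acvg; apply; rewrite divr_gt0 // exprn_gt0.
  move=> [N _ HN].
  exists (m N); exists N => // k /= Nk.
  rewrite -ball_normE /ball_ /=.
  apply: le_lt_trans (norm_le_sqrt _) _.
  rewrite -(@ger0_norm _ e) ?ltW // -sqrtr_sqr ltr_sqrt ?exprn_gt0 //.
  rewrite sqv_sym; apply: le_lt_trans (cau k N Nk) _.
  have := HN N (leqnn N); rewrite distrC ger0_norm ?subr_ge0 ?aD // /a; lra.
pose p := limn m.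
have mp : m @ \oo --> p by [].
have aD' : a @ \oo --> D by [].
have var j l : 2 * scl l * dotv (W - p) (U j - p) - scl l ^+ 2 * sqv (U j - p) <= 0.
  have g_le : \forall k \near \oo, 2 * scl l * dotv (W - m k) (U j - m k)
      - scl l ^+ 2 * sqv (U j - m k) <= a k - a k.+1.
    exists (maxn j l) => // k /= hk.
    have := H3 k j l (leq_trans (leq_maxl _ _) hk) (leq_trans (leq_maxr _ _) hk).
    rewrite comb_exp /a; lra.
  apply: (ler_cvg_to _ _ g_le).
    apply: cvgB; apply: cvgM; try apply: cvg_cst.
      by apply: cvg_dotv; apply: cvgB => //; exact: cvg_cst.
    by apply: cvg_dotv; apply: cvgB => //; exact: cvg_cst.
  rewrite -(subrr D); apply: cvgB => //.
  by rewrite (cvg_shiftS a).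
have var2 j : dotv (W - p) (U j - p) <= 0.
  have h l : dotv (W - p) (U j - p) <= scl l / 2 * sqv (U j - p).
    have := var j l; have : 0 < scl l by rewrite /scl invr_gt0.
    move=> s0; rewrite -subr_le0 => h.
    rewrite -subr_le0 -(@pmulr_rle0 _ (2 * scl l)) ?mulr_gt0 //.
    apply: le_trans h; rewrite le_eqVlt; apply/orP; left; apply/eqP.
    by field.
  have : (fun l => scl l / 2 * sqv (U j - p)) @ \oo --> 0 * sqv (U j - p).
    apply: cvgM; last exact: cvg_cst.
    rewrite -(mul0r (2^-1)); apply: cvgM; last exact: cvg_cst.
    exact: (@cvg_harmonic R).
  rewrite mul0r => hc.
  apply: (ler_cvg_to (cvg_cst _) hc); exact: nearW.
by exists p.
Qed.

End vec2.

Section constr.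
Variables (R : realType) (n : nat) (T : Type).
Local Notation V := 'rV[R]_n.
Variables (u : nat -> T -> V) (w : T -> V).

Definition pick2 (c a : T -> V) : T -> V :=
  fun t => if sqv (w t - c t) < sqv (w t - a t) then c t else a t.

Definition candf (h : seq (T -> V)) (mk : T -> V) (i : nat + (nat * nat)) : T -> V :=
  match i with
  | inl b => fun t => 2^-1 *: (mk t + nth (u 0) h b t)
  | inr p => fun t => (1 - scl R p.2) *: mk t + scl R p.2 *: u p.1 t
  end.

Definition cidx (k : nat) : seq (nat + (nat * nat)) :=
  [seq inl b | b <- iota 0 k.+1] ++
  [seq inr p | p <- [seq (a, b) | a <- iota 0 k.+1, b <- iota 0 k.+1]].

Definition bestf (d : T -> V) (f : nat + (nat * nat) -> T -> V) (s : seq (nat + (nat * nat))) : T -> V :=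
  foldr (fun i acc => pick2 (f i) acc) d s.

Fixpoint hist (k : nat) : seq (T -> V) :=
  match k with
  | 0 => [:: u 0]
  | k'.+1 => let h := hist k' in let mk := last (u 0) h in
      rcons h (bestf mk (candf h mk) (cidx k'))
  end.

Definition mseq k := last (u 0) (hist k).

Lemma size_hist k : size (hist k) = k.+1.
Proof. by elim: k => //= k IH; rewrite size_rcons IH. Qed.

Lemma mseqS k : mseq k.+1 = bestf (mseq k) (candf (hist k) (mseq k)) (cidx k).
Proof. by rewrite /mseq /= last_rcons. Qed.

Lemma nth_hist k b : (b <= k)%N -> nth (u 0) (hist k) b = mseq b.
Proof.
elim: k b => [|k IH] b; first by rewrite leqn0 => /eqP ->.
rewrite leq_eqVlt => /orP[/eqP ->|bk].
  by rewrite /mseq /= nth_rcons size_hist ltnn eqxx last_rcons.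
by rewrite /= nth_rcons size_hist bk IH.
Qed.

Lemma pick2_le c a t : sqv (w t - pick2 c a t) <= sqv (w t - c t) /\
  sqv (w t - pick2 c a t) <= sqv (w t - a t).
Proof.
rewrite /pick2; case: ifPn => h; split => //; first exact: ltW.
by rewrite leNgt.
Qed.

Lemma bestf_le_d d f s t : sqv (w t - bestf d f s t) <= sqv (w t - d t).
Proof.
elim: s => //= i s IH; apply: le_trans IH; exact: (pick2_le _ _ _).2.
Qed.

Lemma bestf_le d f s t i : i \in s -> sqv (w t - bestf d f s t) <= sqv (w t - f i t).
Proof.
elim: s => //= j s IH; rewrite inE => /orP[/eqP ->|iS].
  exact: (pick2_le _ _ _).1.
by apply: le_trans (IH iS); exact: (pick2_le _ _ _).2.
Qed.

Lemma bestf_in (C : V -> Prop) d f s t : C (d t) -> (forall i, i \in s -> C (f i t)) ->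
  C (bestf d f s t).
Proof.
move=> Cd Cf; elim: s Cf => //= j s IH Cf.
rewrite /pick2; case: ifP => _; first by apply: Cf; rewrite inE eqxx.
by apply: IH => i iS; apply: Cf; rewrite inE iS orbT.
Qed.

Lemma mseq_props t :
 (forall k, sqv (w t - mseq k.+1 t) <= sqv (w t - mseq k t)) /\
 (forall k b, (b <= k)%N -> sqv (w t - mseq k.+1 t) <= sqv (w t - 2^-1 *: (mseq k t + mseq b t))) /\
 (forall k j l, (j <= k)%N -> (l <= k)%N ->
    sqv (w t - mseq k.+1 t) <= sqv (w t - ((1 - scl R l) *: mseq k t + scl R l *: u j t))).
Proof.
split; [|split] => [k|k b bk|k j l jk lk]; rewrite mseqS.
- exact: bestf_le_d.
- have hm : (inl b : nat + (nat * nat)) \in cidx k.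
    rewrite mem_cat; apply/orP; left.
    by rewrite mem_map ?mem_iota /=; [rewrite ltnS|move=> x y [->]].
  have := @bestf_le (mseq k) (candf (hist k) (mseq k)) (cidx k) t (inl b) hm.
  by rewrite /candf nth_hist.
- have hm : (inr (j, l) : nat + (nat * nat)) \in cidx k.
    rewrite mem_cat; apply/orP; right.
    rewrite mem_map; last by move=> x y [->].
    by apply/allpairsP; exists (j, l); rewrite !mem_iota /= !ltnS jk lk.
  exact: (@bestf_le (mseq k) (candf (hist k) (mseq k)) (cidx k) t (inr (j, l)) hm).
Qed.

Definition convset (C : V -> Prop) :=
  forall a b (s : R), 0 <= s <= 1 -> C a -> C b -> C ((1 - s) *: a + s *: b).

Lemma mseq_in (C : V -> Prop) t : convset C -> (forall j, C (u j t)) ->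
  forall k, C (mseq k t).
Proof.
move=> cC Cu.
suff H : forall k b, (b <= k)%N -> C (mseq b t).
  by move=> k; exact: (H k k).
elim=> [|k IH] b; first by rewrite leqn0 => /eqP ->; rewrite /mseq /=.
rewrite leq_eqVlt => /orP[/eqP ->|]; last by rewrite ltnS; exact: IH.
rewrite mseqS; apply: bestf_in; first exact: IH.
case=> [c|[j l]]; rewrite mem_cat => hc /=.
- have cb : (c <= k)%N.
    case/orP: hc => [/mapP[x]|/mapP[x _]] //; rewrite mem_iota /= ltnS => xk [->] //.
  rewrite nth_hist //.
  have -> : 2^-1 *: (mseq k t + mseq c t) = (1 - 2^-1) *: mseq k t + 2^-1 *: mseq c t.
    by apply/matrixP => i i'; rewrite !mxE; field.
  apply: cC; [|exact: IH|exact: IH].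
  by rewrite invr_ge0 ler0n /= invf_le1 ?ler1n.
- apply: cC => //; first by rewrite /scl invr_ge0 ler0n /= invf_le1 ?ler1n.
  exact: IH.
Qed.

End constr.

Section meas.
Variables (d : measure_display) (T : measurableType d) (R : realType) (n : nat).
Local Notation V := 'rV[R]_n.

Lemma vmeas_comb (f g : T -> V) (a b : R) : vmeasurable f -> vmeasurable g ->
  vmeasurable (fun t => a *: f t + b *: g t).
Proof.
move=> mf mg i.
rewrite (_ : (fun t => _) = (fun t => a * f t ord0 i + b * g t ord0 i)); last first.
  by apply/funext => t; rewrite !mxE.
apply: measurable_realfun.measurable_funD; apply: measurable_realfun.measurable_funM => //; exact: measurable_cst.
Qed.

Lemma meas_dotv (f g : T -> V) : vmeasurable f -> vmeasurable g ->
  measurable_fun setT (fun t => dotv (f t) (g t)).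
Proof.
move=> mf mg; rewrite /dotv; apply: measurable_sum => i.
exact: measurable_realfun.measurable_funM.
Qed.

Lemma vmeasB (f g : T -> V) : vmeasurable f -> vmeasurable g ->
  vmeasurable (fun t => f t - g t).
Proof.
move=> mf mg i.
rewrite (_ : (fun t => _) = (fun t => f t ord0 i - g t ord0 i)); last first.
  by apply/funext => t; rewrite !mxE.
exact: measurable_realfun.measurable_funB.
Qed.

Lemma vmeas_pick2 (w c a : T -> V) : vmeasurable w -> vmeasurable c -> vmeasurable a ->
  vmeasurable (pick2 w c a).
Proof.
move=> mw mc ma i.
rewrite (_ : (fun t => _) = (fun t => if sqv (w t - c t) < sqv (w t - a t)
    then c t ord0 i else a t ord0 i)); last first.
  by apply/funext => t; rewrite /pick2; case: ifP.
apply: measurable_fun_ifT => //.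
by apply: measurable_realfun.measurable_fun_ltr; apply: meas_dotv; apply: vmeasB.
Qed.

Lemma vmeas_bestf (w dd : T -> V) f s : vmeasurable w -> vmeasurable dd ->
  (forall i, i \in s -> vmeasurable (f i)) -> vmeasurable (bestf w dd f s).
Proof.
move=> mw md; elim: s => //= j s IH mf.
apply: vmeas_pick2 => //; first by apply: mf; rewrite inE eqxx.
by apply: IH => i iS; apply: mf; rewrite inE iS orbT.
Qed.

Lemma vmeas_mseq (u : nat -> T -> V) (w : T -> V) :
  (forall j, vmeasurable (u j)) -> vmeasurable w -> forall k, vmeasurable (mseq u w k).
Proof.
move=> mu mw.
suff H : forall k b, (b <= k)%N -> vmeasurable (mseq u w b).
  by move=> k; exact: (H k k).
elim=> [|k IH] b; first by rewrite leqn0 => /eqP ->; exact: mu.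
rewrite leq_eqVlt => /orP[/eqP ->|]; last by rewrite ltnS; exact: IH.
rewrite mseqS; apply: vmeas_bestf => //; first exact: IH.
case=> [c|[j l]]; rewrite mem_cat => hc /=.
- have cb : (c <= k)%N.
    case/orP: hc => [/mapP[x]|/mapP[x _]] //; rewrite mem_iota /= ltnS => xk [->] //.
  rewrite (_ : (fun t => _) = (fun t => 2^-1 *: mseq u w k t + 2^-1 *: mseq u w c t)).
    by apply: vmeas_comb; exact: IH.
  by apply/funext => t; rewrite nth_hist // scalerDr.
- by apply: vmeas_comb => //; exact: IH.
Qed.

End meas.

Section projF.
Variables (R : realType) (n : nat) (T : Type).
Local Notation V := 'rV[R]_n.
Variables (u : nat -> T -> V) (w : T -> V).

Definition projF t : V := limn (fun k => mseq u w k t).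

Lemma projF_props t : (fun k => mseq u w k t) @ \oo --> projF t /\
  forall j, dotv (w t - projF t) (u j t - projF t) <= 0.
Proof.
have [H1 [H2 H3]] := mseq_props u w t.
have [p [mp hp]] := proj_analysis H1 H2 H3.
have -> : projF t = p by exact: cvg_lim mp.
by split.
Qed.

End projF.

Lemma vmeas_projF d (T : measurableType d) (R : realType) (n : nat)
  (u : nat -> T -> 'rV[R]_n) (w : T -> 'rV[R]_n) :
  (forall j, vmeasurable (u j)) -> vmeasurable w -> vmeasurable (projF u w).
Proof.
move=> mu mw i.
apply: (@measurable_realfun.measurable_fun_cvg _ _ _ _ (fun k t => mseq u w k t ord0 i)).
  by move=> k; exact: vmeas_mseq.
move=> t _; apply: cvg_entry; exact: (projF_props u w t).1.
Qed.

Section null.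
Variables (d : measure_display) (T : measurableType d) (R : realType)
  (mu : {measure set T -> \bar R}) (n : nat).
Local Notation V := 'rV[R]_n.

Lemma vint_meas (f : T -> V) : vintegrable mu f -> vmeasurable f.
Proof. by move=> fi i; apply/measurable_EFinP; exact: (measurable_int _ (fi i)). Qed.

Lemma entry_le_enorm (f : V) i : `|f ord0 i| <= enorm f.
Proof. by rewrite enormE -sqrtr_sqr; apply: ler_wsqrtr; exact: entry_le_sqv. Qed.

Lemma meas_enorm (f : T -> V) : vmeasurable f -> measurable_fun setT (fun t => enorm (f t)).
Proof.
move=> mf; rewrite /enorm.
apply: measurableT_comp; first exact: (continuous_measurable_fun (@sqrt_continuous R)).
apply: measurable_sum => i; exact: measurable_funX.
Qed.

Lemma int_hf (h : T -> R) (B : R) (f : T -> V) i : measurable_fun setT h ->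
  (forall t, `|h t| <= B) -> vintegrable mu f ->
  mu.-integrable setT (EFin \o (fun t => h t * f t ord0 i)).
Proof.
move=> mh hB fi.
rewrite (_ : _ \o _ = ((EFin \o h) \* (fun t => (f t ord0 i)%:E))%E); last first.
  by apply/funext => t /=; rewrite EFinM.
apply: integrableMr; [by []|exact: mh| |exact: fi i].
exists B; split; first exact: num_real.
by move=> M BM t _ /=; apply: le_trans (hB t) (ltW BM).
Qed.

Definition testphi (h : 'I_n -> T -> R) (f : T -> V) : R :=
  \sum_(i < n) Rintegral mu setT (fun t => h i t * f t ord0 i).

Lemma testphi_dual (h : 'I_n -> T -> R) (B : R) : 0 <= B ->
  (forall i, measurable_fun setT (h i)) -> (forall i t, `|h i t| <= B) ->
  L1_dual mu (testphi h).
Proof.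
move=> B0 mh hB; split; [|split].
- move=> f g fi gi; rewrite /testphi -big_split /=; apply: eq_bigr => i _.
  rewrite -RintegralD //; try exact: int_hf.
  by apply: eq_Rintegral => t _; rewrite mxE mulrDr.
- move=> a f fi; rewrite /testphi mulr_sumr; apply: eq_bigr => i _.
  rewrite -RintegralZl //; last exact: int_hf.
  by apply: eq_Rintegral => t _; rewrite mxE; ring.
- exists (n%:R * B + 1) => f fi.
  have I0 : (0 <= \int[mu]_t (enorm (f t))%:E)%E.
    by apply: integral_ge0 => t _; rewrite lee_fin enormE sqrtr_ge0.
  have C0 : 0 < n%:R * B + 1 by rewrite ltr_wpDl // mulr_ge0.
  move: I0; case E : (\int[mu]_t (enorm (f t))%:E)%E => [r| |] // r0.
    have hi i : `|Rintegral mu setT (fun t => h i t * f t ord0 i)| <= B * r.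
      rewrite -lee_fin EFin_normr_Rintegral //; last exact: int_hf.
      apply: le_trans (le_abse_integral _ _ _) _ => //.
        apply/measurable_EFinP; apply: measurable_realfun.measurable_funM => //.
        exact: vint_meas.
      rewrite EFinM -E -ge0_integralZl_EFin //;
        try (by move=> t _; rewrite lee_fin enormE sqrtr_ge0);
        try (by apply/measurable_EFinP; apply: meas_enorm; exact: vint_meas).
      apply: ge0_le_integral => //.
      + apply: measurableT_comp => //; apply/measurable_EFinP.
        apply: measurable_realfun.measurable_funM => //; exact: vint_meas.
      + apply/measurable_EFinP; apply: measurable_realfun.measurable_funM.
          exact: measurable_cst.
        by apply: meas_enorm; exact: vint_meas.
      + move=> t _ /=; rewrite lee_fin normrM; apply: ler_pM => //.
        exact: entry_le_enorm.
    rewrite lee_fin /testphi; apply: le_trans (ler_norm_sum _ _ _) _.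
    apply: le_trans (ler_sum _ (fun i _ => hi i)) _.
    rewrite sumr_const card_ord -mulr_natl.
    rewrite lee_fin in r0; nra.
  by rewrite mulr_infty gtr0_sg // mul1e leey.
Qed.


Lemma vintB (f g : T -> V) : vintegrable mu f -> vintegrable mu g ->
  vintegrable mu (fun t => f t - g t).
Proof.
move=> fi gi i.
rewrite (_ : (fun t => _) = ((fun t => (f t ord0 i)%:E) \- (fun t => (g t ord0 i)%:E))%E).
  exact: integrableB.
by apply/funext => t /=; rewrite !mxE EFinB.
Qed.

Lemma Rint_sum (f : 'I_n -> T -> R) :
  (forall i, mu.-integrable setT (EFin \o f i)) ->
  Rintegral mu setT (fun t => \sum_(i < n) f i t) =
  \sum_(i < n) Rintegral mu setT (f i).
Proof.
move=> fi.
have H : forall s : seq 'I_n,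
   mu.-integrable setT (EFin \o (fun t => \sum_(i <- s) f i t)) /\
   Rintegral mu setT (fun t => \sum_(i <- s) f i t) = \sum_(i <- s) Rintegral mu setT (f i).
  elim=> [|i s [IHi IH]].
    under eq_fun do rewrite big_nil.
    rewrite big_nil; split; last by rewrite /Rintegral integral0.
    exact: integrable0.
  under eq_fun do rewrite big_cons.
  rewrite big_cons; split.
    rewrite (_ : _ \o _ = ((EFin \o f i) \+ (EFin \o (fun t => (\sum_(j <- s) f j t)%R)))%E).
      exact: integrableD.
    by apply/funext => t /=; rewrite EFinD.
  by rewrite RintegralD // IH.
exact: (H _).2.
Qed.

Lemma null_E (u : nat -> T -> V) (w v : T -> V) (c B : R) (E : set T) :
  measurable E -> vmeasurable v -> 0 <= B ->
  (forall t, E t -> forall i, `|v t ord0 i| <= B) -> 0 < c ->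
  (forall t, E t -> c <= sqv (v t)) ->
  (forall j t, E t -> sqv (v t) <= dotv (v t) (w t - u j t)) ->
  (forall j, vintegrable mu (u j)) -> vintegrable mu w ->
  (forall phi, L1_dual mu phi -> (fun j => phi (u j)) @ \oo --> phi w) ->
  mu E = 0.
Proof.
move=> mE mv B0 vB c0 cv dv ui wi hcvg.
pose h i t := \1_E t * v t ord0 i.
have hB i t : `|h i t| <= B.
  rewrite /h indicE; have [tE|tE] := boolP (t \in E).
    by rewrite mul1r; apply: vB; exact: set_mem.
  by rewrite mul0r normr0.
have mh i : measurable_fun setT (h i).
  by apply: measurable_funM; [exact: measurable_indic|exact: mv].
have dual := testphi_dual B0 mh hB.
have cvj := hcvg _ dual.
pose G j t := \sum_(i < n) h i t * (w t - u j t) ord0 i.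
have hint (f : T -> V) i : vintegrable mu f ->
    mu.-integrable setT (EFin \o (fun t => h i t * f t ord0 i)).
  by move=> fi; apply: int_hf fi => //; exact: hB.
have Gs j : Rintegral mu setT (G j) =
    \sum_(i < n) Rintegral mu setT (fun t => h i t * (w t - u j t) ord0 i).
  by apply: Rint_sum => i; apply: hint; exact: vintB.
have Gint j : mu.-integrable setT (EFin \o G j).
  rewrite (_ : _ \o _ = (fun t => \sum_(i < n) (h i t * (w t - u j t) ord0 i)%:E)%E).
    by apply: integrable_sum => // i _; apply: hint; exact: vintB.
  by apply/funext => t /=; rewrite sumEFin.
have keyeq j : testphi h w - testphi h (u j) = Rintegral mu setT (G j).
  rewrite Gs /testphi -sumrB; apply: eq_bigr => i _.
  rewrite -RintegralB //; try exact: hint.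
  by apply: eq_Rintegral => t _; rewrite !mxE mulrBr.
have Gge j t : c * \1_E t <= G j t.
  have -> : G j t = \1_E t * dotv (v t) (w t - u j t).
    by rewrite /G /dotv mulr_sumr; apply: eq_bigr => i _; rewrite /h mulrA.
  rewrite indicE; have [tE|tE] := boolP (t \in E); rewrite /= ?mul1r ?mul0r ?mulr1 ?mulr0 //.
  have Et : E t by exact: set_mem.
  exact: le_trans (cv t Et) (dv j t Et).
have mG j : measurable_fun setT (G j).
  by apply/measurable_EFinP; exact: (measurable_int _ (Gint j)).
have cE : (\int[mu]_t (c * \1_E t)%:E = c%:E * mu E)%E.
  under eq_integral do rewrite EFinM.
  rewrite ge0_integralZl_EFin ?ltW //;
    try (by rewrite integral_indic // setIT);
    try (by move=> t _; rewrite lee_fin indicE ler0n);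
    try (by apply/measurable_EFinP; exact: measurable_indic).
have fin : (mu E < +oo)%E.
  have h1 : (c%:E * mu E <= \int[mu]_t (G 0%N t)%:E)%E.
    rewrite -cE; apply: ge0_le_integral => //.
    - by move=> t _; rewrite lee_fin; apply: mulr_ge0; [exact: ltW|rewrite indicE ler0n].
    - apply/measurable_EFinP; apply: measurable_funM; first exact: measurable_cst.
      exact: measurable_indic.
    - exact/measurable_EFinP.
    - by move=> t _; rewrite lee_fin.
  have h2 : (\int[mu]_t (G 0%N t)%:E < +oo)%E.
    have /integrableP[_ hG] := Gint 0%N.
    apply: le_lt_trans hG; apply: le_trans (lee_abs _) _.
    by apply: le_abse_integral => //; exact/measurable_EFinP.
  have h3 := le_lt_trans h1 h2.
  move: h3; have := leey (mu E); rewrite le_eqVlt => /orP[/eqP ->|//].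
  by rewrite mulr_infty gtr0_sg // mul1e ltxx.
have muE_fin : mu E \is a fin_num by rewrite ge0_fin_numE // measure_ge0.
have cEint : mu.-integrable setT (EFin \o (fun t => c * \1_E t)).
  apply/integrableP; split.
    apply/measurable_EFinP; apply: measurable_funM; first exact: measurable_cst.
    exact: measurable_indic.
  rewrite (eq_integral (fun t => (c * \1_E t)%:E)); first by rewrite cE lte_mul_pinfty // lee_fin ltW.
  by move=> t _ /=; rewrite ger0_norm //; apply: mulr_ge0; [exact: ltW|rewrite indicE ler0n].
have lb j : c * fine (mu E) <= testphi h w - testphi h (u j).
  rewrite keyeq.
  have -> : c * fine (mu E) = Rintegral mu setT (fun t => c * \1_E t).
    by rewrite /Rintegral cE fineM.
  by apply: (le_Rintegral _ cEint (Gint j)) => // t _; exact: Gge.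
have lim0 : (fun j => testphi h w - testphi h (u j)) @ \oo --> 0.
  rewrite -(subrr (testphi h w)); apply: cvgB => //; exact: cvg_cst.
have : c * fine (mu E) <= 0.
  by apply: (ler_cvg_to (cvg_cst _) lim0); apply: nearW; exact: lb.
rewrite pmulr_rle0 // => hf.
have mE0 : (0 <= mu E)%E by exact: measure_ge0.
have : mu E \is a fin_num by rewrite ge0_fin_numE.
move=> /fineK <-; apply/eqP; rewrite eq_le lee_fin hf /=.
by rewrite fineK // ge0_fin_numE.
Qed.

End null.

Section conv.
Variables (R : realType) (n : nat).
Local Notation V := 'rV[R]_n.

Lemma conv_in (A : set V) a : A a -> conv_hull A a.
Proof.
move=> Aa; exists 1%N, (fun=> 1), (fun=> a); split => //; split.
  by rewrite big_ord1.
by split => //; rewrite big_ord1 scale1r.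
Qed.

Lemma conv_convset (A : set V) : convset (conv_hull A).
Proof.
move=> a b s /andP[s0 s1] [N1 [l1 [p1 [l10 [l11 [Ap1 ->]]]]]]
  [N2 [l2 [p2 [l20 [l21 [Ap2 ->]]]]]].
exists (N1 + N2)%N.
exists (fun i => match fintype.split i with inl i1 => (1 - s) * l1 i1 | inr i2 => s * l2 i2 end).
exists (fun i => match fintype.split i with inl i1 => p1 i1 | inr i2 => p2 i2 end).
have e1 i : fintype.split (lshift N2 i) = inl i := unsplitK (inl i).
have e2 i : fintype.split (rshift N1 i) = inr i := unsplitK (inr i).
split; [|split; [|split]].
- move=> i; case: fintype.split => j; apply: mulr_ge0 => //; by rewrite subr_ge0.
- rewrite big_split_ord /=.
  under eq_bigr do rewrite e1.
  under [X in _ + X]eq_bigr do rewrite e2.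
  by rewrite -!mulr_sumr l11 l21 !mulr1 subrK.
- by move=> i; case: fintype.split.
- rewrite big_split_ord /=.
  under [in RHS]eq_bigr do rewrite e1.
  under [X in _ = _ + X]eq_bigr do rewrite e2.
  rewrite !scaler_sumr; congr (_ + _); apply: eq_bigr => i _; by rewrite scalerA.
Qed.

Lemma enorm_le_norm (v : V) : enorm v <= n.+1%:R * `|v|.
Proof.
rewrite enormE -[X in _ <= X]ger0_norm ?mulr_ge0 // -sqrtr_sqr.
apply: ler_wsqrtr; rewrite /sqv /dotv.
apply: (@le_trans _ _ (\sum_(i < n) `|v|^+2)).
  apply: ler_sum => i _; rewrite -expr2 -real_normK ?num_real //.
  by rewrite lerXn2r ?nnegrE // entry_le_norm.
rewrite sumr_const card_ord exprMn -[leLHS]mulr_natl.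
apply: ler_wpM2r; first exact: sqr_ge0.
by rewrite -natrX ler_nat expnS; apply: leq_trans (leqnSn _) _; rewrite leq_pmulr.
Qed.

End conv.

Section pw.
Variables (R : realType) (n : nat).
Local Notation V := 'rV[R]_n.
Lemma pointwise (m : nat) (F : 'rV[R]_m -> set V) (xs : nat -> 'rV[R]_m)
  (x0 : 'rV[R]_m) (ys : nat -> V) (y0 : V) (M : nat -> nat -> V) :
  xs @ \oo --> x0 -> (forall k, F (xs k) (ys k)) ->
  (forall N, M N @ \oo --> y0) ->
  (forall N (C : V -> Prop), convset C -> (forall j, C (ys (j + N)%N)) ->
     forall j, C (M N j)) ->
  conv_infty F x0 y0.
Proof.
move=> hx hF hM hC.
pose A k := conv_hull (svimage F (eball x0 (k.+1%:R)^-1)).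
have step k : exists z, A k z /\ `|y0 - z| < (k.+1%:R)^-1.
  have rk : 0 < (k.+1%:R)^-1 :> R by rewrite invr_gt0.
  have [N _ HN] : \forall j \near \oo, `|x0 - xs j| < (k.+1%:R)^-1 / m.+1%:R.
    by move/cvgrPdist_lt : hx; apply; rewrite divr_gt0.
  have CA : forall j, A k (ys (j + N)%N).
    move=> j; apply: conv_in; exists (xs (j + N)%N); last exact: hF.
    rewrite /eball /=; apply: le_lt_trans (enorm_le_norm _) _.
    rewrite distrC -ltr_pdivlMl // mulrC; apply: HN; exact: leq_addl.
  have hin := hC N (A k) (@conv_convset _ _ _) CA.
  have [J _ HJ] : \forall j \near \oo, `|y0 - M N j| < (k.+1%:R)^-1.
    by move/cvgrPdist_lt: (hM N); apply.
  by exists (M N J); split; [exact: hin | exact: (HJ J (leqnn J))].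
have [z hz] := boolp.choice step.
exists id, z; split => //; split => [j|]; first exact: (hz j).1.
apply/cvgrPdist_lt => e e0.
have := (@cvg_harmonic R); move/cvgrPdist_lt => /(_ e e0).
apply: filterS => k; rewrite sub0r normrN /= ger0_norm ?invr_ge0 // => hk.
exact: lt_trans (hz k).2 hk.
Qed.

End pw.

Theorem theorem4p9 (d : measure_display) (T : measurableType d) (R : realType)
  (mu : {measure set T -> \bar R}) (m n : nat)
  (F : 'rV[R]_m -> set 'rV[R]_n)
  (x_ : nat -> T -> 'rV[R]_m) (y_ : nat -> T -> 'rV[R]_n)
  (x : T -> 'rV[R]_m) (y : T -> 'rV[R]_n) :
  (forall k, vmeasurable (x_ k)) ->
  (forall k, vmeasurable (y_ k)) ->
  {ae mu, forall t, (fun k => x_ k t) @ \oo --> x t} ->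
  weak_L1_cvg mu y_ y ->
  (forall k, {ae mu, forall t, F (x_ k t) (y_ k t)}) ->
  {ae mu, forall t, conv_infty F (x t) (y t)}.
Proof.
move=> mx my hx [yi [yint hw]] hF.
pose u N j := y_ (j + N)%N.
pose p N := projF (u N) y.
pose v N t := y t - p N t.
have mv N : vmeasurable (v N).
  apply: vmeasB; first exact: (vint_meas yint).
  by apply: vmeas_projF => // [j|]; [exact: my|exact: (vint_meas yint)].
pose E N l := (fun t => sqv (v N t)) @^-1` `[scl R l, l.+1%:R].
have mE N l : measurable (E N l).
  have ms : measurable_fun setT (fun t => sqv (v N t)) by apply: meas_dotv.
  by rewrite -[E N l]setTI; apply: ms => //; exact: measurable_itv.
have E0 N l : mu (E N l) = 0.
  apply: (@null_E _ _ _ mu _ (u N) y (v N) (scl R l) l.+1%:R) => //.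
  - move=> t; rewrite /E /= in_itv /= => /andP[_ h] i.
    have := entry_le_sqv (v N t) i; rewrite -real_normK ?num_real // => h2.
    have h3 : 0 <= `|v N t ord0 i| by [].
    have h4 : 1 <= l.+1%:R :> R by rewrite ler1n.
    nra.
  - by rewrite /scl invr_gt0.
  - by move=> t; rewrite /E /= in_itv /= => /andP[h _].
  - move=> j t _; have [_ hp] := projF_props (u N) y t.
    have h := hp j; rewrite /v /p (dot_split _ _ _ (projF (u N) y t)) /sqv; lra.
  - by move=> j; exact: yi.
  - by move=> phi hphi; have := hw phi hphi; rewrite -(cvg_shiftn N).
have aeE : {ae mu, forall t, forall N l, ~ E N l t}.
  apply: ae_foralln => N; apply: ae_foralln => l.
  by exists (E N l); split => // t /=; exact: contrapT.
have aeF : {ae mu, forall t, forall k, F (x_ k t) (y_ k t)} by apply: ae_foralln.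
apply: filterS (filterI hx (filterI aeF aeE)) => t [hxt [hFt hEt]].
apply: (@pointwise _ _ _ F (fun k => x_ k t) (x t) (fun k => y_ k t) (y t)
   (fun N j => mseq (u N) y j t)) => //.
- move=> N; have [h1 _] := projF_props (u N) y t.
  suff e : p N t = y t by rewrite -e.
  have s0 : sqv (v N t) = 0.
    apply/eqP; rewrite eq_le sqv_ge0 andbT; apply/negP => /negP.
    rewrite -ltNge => s0.
    apply: (hEt N (Num.Def.trunc (sqv (v N t) + (sqv (v N t))^-1))).
    have hL := truncnS_gt (sqv (v N t) + (sqv (v N t))^-1).
    set L := (Num.Def.trunc _).+1%:R in hL *.
    rewrite /E /= in_itv /=; apply/andP; split; last first.
      by apply: ltW; apply: le_lt_trans hL; rewrite lerDl invr_ge0 ltW.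
    rewrite /scl -/L; rewrite -(invrK (sqv _)) lef_pV2 ?posrE ?invr_gt0 //.
    by apply: ltW; apply: le_lt_trans hL; rewrite lerDr ltW.
  have v0 : v N t = 0.
    apply/matrixP => i j; rewrite (ord1 i) [in RHS]mxE; apply/eqP.
    by rewrite -sqrf_eq0 eq_le sqr_ge0 andbT -s0 entry_le_sqv.
  by apply/esym/eqP; rewrite -subr_eq0 -/(v N t) v0.
- by move=> N C cC hCy j; apply: (@mseq_in _ _ _ (u N) y C t cC) => i; exact: hCy.
Qed.
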